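(* Fix a target trajectory $\bm{p}_O:[0,\infty)\to\mathbb{R}^3$ (continuously differentiable) and an end-effector trajectory $\bm{p}_E:[0,\infty)\to\mathbb{R}^3$ obeying $$\dot{\bm{p}}_E(t)=\dot{\bm{p}}_{E,d}(t)+\bm{\Delta}(t),$$ where $\bm{\Delta}$ is an unknown term satisfying $\|\bm{\Delta}(t)\|\le\delta_E$ for all $t\ge0$, for some constant $\delta_E>0$. Let $\bm{e}_E=\bm{p}_E-\bm{p}_O=[e_{E,x},e_{E,y},e_{E,z}]^T$. Let $\bm{\Lambda}$ and $\bm{K}$ be positive diagonal $3\times3$ matrices and set $$\delta_{\bm z}=\frac{(\lambda_{\min}(\bm\Lambda)+\lambda_{\max}(\bm\Lambda))\,\delta_E}{\lambda_{\min}(\bm\Lambda)\,\lambda_{\min}(\bm K)}.$$ For each $\nu\in\{x,y,z\}$ let $\rho_\nu(t)=(\rho_{\nu,0}-\rho_{\nu,\infty})e^{-l_E t}+\rho_{\nu,\infty}$ with constants $l_E>0$, $\rho_{\nu,\infty}>0$ and $\rho_{\nu,0}>|e_{E,\nu}(0)|$, and assume $\bm K$ is chosen so that $\delta_{\bm z}<\min\{\rho_{\nu,\infty},\ \rho_{\nu,0}-|e_{E,\nu}(0)|\}$ for every $\nu$. Let $b_\nu=l_E e_{E,\nu}(0)+\dot e_{E,\nu}(0)$ and choose $c_\nu>0$ with $c_\nu>|b_\nu|/(\rho_{\nu,0}-\delta_{\bm z}-|e_{E,\nu}(0)|)$. Define the preset trajectory $\bm\alpha(t)=[\alpha_x(t),\alpha_y(t),\alpha_z(t)]^T$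 by $$\alpha_\nu(t)=\frac{b_\nu}{c_\nu}(1-e^{-c_\nu t})e^{-l_E t}+e_{E,\nu}(0)e^{-l_E t},$$ and set $\bm z=\bm e_E-\bm\alpha(t)$, $\bm s=\bm z+\bm\Lambda\int_0^t\bm z\,d\tau$. If the desired end-effector velocity is given by the control law $$\dot{\bm p}_{E,d}=\dot{\bm p}_O+\dot{\bm\alpha}-\bm\Lambda\bm z-\bm K\bm s,$$ then the tracking error $\bm e_E$ is bounded and $|e_{E,\nu}(t)|<\rho_\nu(t)$ for all $t\ge0$ and all $\nu\in\{x,y,z\}$.
   Context: This is a kinematic tracking-control setting for the end-effector of an aerial manipulator: $\bm p_E$ is the end-effector position, $\bm p_O$ the target position, $\dot{\bm p}_{E,d}$ the commanded end-effector velocity, and $\bm\Delta$ the (bounded) mismatch between commanded and realized velocity. $\rho_\nu$ is the performance-envelope boundary function for coordinate $\nu$; $\dot e_{E,\nu}(0)$ is the initial rate of the tracking error. $\lambda_{\min},\lambda_{\max}$ denote minimum and maximum eigenvalues. *)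

(* Defs.v *)
From Stdlib Require Import Reals.
From Coquelicot Require Export Coquelicot.
Export Reals.
Open Scope R_scope.

Inductive axis : Set := AX | AY | AZ.

Definition vec3 := axis -> R.

Definition norm3 (v : vec3) : R := sqrt (v AX ^ 2 + v AY ^ 2 + v AZ ^ 2).

(* A positive diagonal 3x3 matrix is represented by its diagonal entries;
   its extreme eigenvalues are the extreme diagonal entries. *)
Definition diag_pos (d : vec3) : Prop := forall nu, 0 < d nu.
Definition lam_min (d : vec3) : R := Rmin (Rmin (d AX) (d AY)) (d AZ).
Definition lam_max (d : vec3) : R := Rmax (Rmax (d AX) (d AY)) (d AZ).

Definition deriv_nonneg (f f' : R -> R) : Prop :=
  forall t, 0 <= t ->
    filterlim (fun s => (f s - f t) / (s - t))
      (within (fun s => 0 <= s /\ s <> t) (locally t)) (locally (f' t)).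

Definition cont_nonneg (f : R -> R) : Prop :=
  forall t, 0 <= t -> filterlim f (within (fun s => 0 <= s) (locally t)) (locally (f t)).

Definition rho_fn (lE r0 rinf t : R) : R := (r0 - rinf) * exp (- lE * t) + rinf.

Definition alpha_fn (lE b c e0 t : R) : R :=
  b / c * (1 - exp (- c * t)) * exp (- lE * t) + e0 * exp (- lE * t).

(* Main.v *)
Require Import Defs.
From Stdlib Require Import Reals Lra.
From Coquelicot Require Import Coquelicot.
Open Scope R_scope.

Lemma within_eps (h : R -> R) (D : R -> Prop) t l :
  filterlim h (within D (locally t)) (locally l) ->
  forall eps, 0 < eps -> exists d, 0 < d /\
    forall y, Rabs (y - t) < d -> D y -> Rabs (h y - l) < eps.
Proof.
  intros H eps Heps.
  destruct (proj1 (filterlim_locally h l) H (mkposreal eps Heps)) as [d Hd].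
  exists d; split; [apply cond_pos|].
  intros y Hy HD. apply (Hd y); [exact Hy| exact HD].
Qed.

Lemma deriv_pt (f f' : R -> R) : deriv_nonneg f f' ->
  forall x, 0 < x -> derivable_pt_lim f x (f' x).
Proof.
  intros H x Hx eps Heps.
  destruct (within_eps _ _ _ _ (H x (Rlt_le _ _ Hx)) eps Heps) as [d [Hd Hd']].
  assert (Hm : 0 < Rmin d x) by (apply Rmin_glb_lt; lra).
  exists (mkposreal _ Hm). simpl. intros h Hh Hlt.
  assert (Hd1 : Rabs h < d) by (eapply Rlt_le_trans; [exact Hlt| apply Rmin_l]).
  assert (Hd2 : Rabs h < x) by (eapply Rlt_le_trans; [exact Hlt| apply Rmin_r]).
  replace ((f (x + h) - f x) / h) with ((f (x+h) - f x) / ((x+h) - x)) by (f_equal; ring).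
  apply Hd'.
  - replace (x + h - x) with h by ring; exact Hd1.
  - split.
    + apply Rabs_def2 in Hd2. lra.
    + intro E. apply Hh. lra.
Qed.

Definition C (f : R -> R) := forall x, continuity_pt (fun y => f (Rmax 0 y)) x.

Lemma Rmax_lip x y : Rabs (Rmax 0 y - Rmax 0 x) <= Rabs (y - x).
Proof.
  unfold Rmax; destruct (Rle_dec 0 y); destruct (Rle_dec 0 x);
  unfold Rabs; repeat destruct Rcase_abs; lra.
Qed.

Lemma deriv_C (f f' : R -> R) : deriv_nonneg f f' -> C f.
Proof.
  intros H x. apply continuity_pt_locally. intros eps.
  set (x' := Rmax 0 x).
  assert (Hx' : 0 <= x') by apply Rmax_l.
  destruct (within_eps _ _ _ _ (H x' Hx') 1 Rlt_0_1) as [d [Hd Hd']].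
  set (k := Rabs (f' x') + 1).
  assert (Hk : 0 < k) by (unfold k; pose proof (Rabs_pos (f' x')); lra).
  assert (Hm : 0 < Rmin d (eps / k)).
  { apply Rmin_glb_lt; [lra|]. apply Rdiv_lt_0_compat; [apply cond_pos|lra]. }
  exists (mkposreal _ Hm). intros y Hy.
  change (ball x (Rmin d (eps / k)) y) in Hy.
  assert (Hy' : Rabs (y - x) < Rmin d (eps / k)) by exact Hy.
  pose proof (Rmax_lip x y) as HL. fold x' in HL.
  set (y' := Rmax 0 y) in *.
  fold x'.
  destruct (Req_dec y' x') as [E|E].
  { rewrite E. replace (f x' - f x') with 0 by ring. rewrite Rabs_R0. apply cond_pos. }
  assert (Hq := Hd' y').
  assert (A1 : Rabs (y' - x') < d).
  { eapply Rle_lt_trans; [exact HL|]. eapply Rlt_le_trans; [exact Hy'|apply Rmin_l]. }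
  assert (A2 : Rabs (y' - x') < eps / k).
  { eapply Rle_lt_trans; [exact HL|]. eapply Rlt_le_trans; [exact Hy'|apply Rmin_r]. }
  specialize (Hq A1 (conj (Rmax_l 0 y) E)).
  assert (Hne : y' - x' <> 0) by lra.
  replace (f y' - f x') with ((f y' - f x') / (y' - x') * (y' - x')) by (field; exact Hne).
  rewrite Rabs_mult.
  assert (B : Rabs ((f y' - f x') / (y' - x')) <= k).
  { unfold k.
    replace ((f y' - f x') / (y' - x')) with (((f y' - f x') / (y' - x') - f' x') + f' x') by ring.
    eapply Rle_trans; [apply Rabs_triang|]. lra. }
  apply Rle_lt_trans with (k * Rabs (y' - x')).
  { apply Rmult_le_compat_r; [apply Rabs_pos|exact B]. }
  apply Rmult_lt_reg_r with (/ k); [apply Rinv_0_lt_compat; lra|].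
  replace (k * Rabs (y' - x') * / k) with (Rabs (y' - x')) by (field; lra).
  exact A2.
Qed.

Lemma G (f f' : R -> R) t : 0 <= t -> C f ->
  (forall x, 0 < x < t -> derivable_pt_lim f x (f' x)) ->
  (forall x, 0 < x < t -> f' x <= 0) -> f t <= f 0.
Proof.
  intros Ht HC HD HS.
  set (g := fun y => f (Rmax 0 y)).
  set (dg := fun x => if Rlt_dec 0 x then if Rlt_dec x t then f' x else 0 else 0).
  destruct (MVT_gen g 0 t dg) as [c [Hc E]].
  - intros x Hx. rewrite Rmin_left in Hx by lra. rewrite Rmax_right in Hx by lra.
    unfold dg. destruct (Rlt_dec 0 x); [|lra]. destruct (Rlt_dec x t); [|lra].
    apply (is_derive_ext_loc f).
    + exists (mkposreal x (proj1 Hx)). intros y Hy. unfold g.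
      change (Rabs (y - x) < x) in Hy. apply Rabs_def2 in Hy.
      rewrite Rmax_right by lra. reflexivity.
    + apply is_derive_Reals. apply HD; lra.
  - intros x _. apply HC.
  - unfold g in E. rewrite (Rmax_right 0 t) in E by lra. rewrite Rmax_left in E by lra.
    assert (dg c <= 0).
    { unfold dg. destruct (Rlt_dec 0 c); [|lra]. destruct (Rlt_dec c t); [|lra]. apply HS; lra. }
    nra.
Qed.

Lemma Rmax0_cont x : continuity_pt (fun y => Rmax 0 y) x.
Proof.
  apply continuity_pt_locally. intros eps. exists eps. intros y Hy.
  change (Rabs (y - x) < eps) in Hy. eapply Rle_lt_trans; [apply Rmax_lip|exact Hy].
Qed.

Lemma RInt_facts (z : R -> R) : C z ->
  (forall x, 0 < x -> derivable_pt_lim (fun t => RInt z 0 t) x (z x)) /\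
  C (fun t => RInt z 0 t).
Proof.
  intros HC.
  set (zt := fun y => z (Rmax 0 y)).
  assert (Hc : forall y, continuous zt y).
  { intro y. apply continuity_pt_filterlim. apply HC. }
  set (Zt := fun y => RInt zt 0 y).
  assert (HD : forall x, is_derive Zt x (zt x)).
  { intro x. apply is_derive_RInt with 0.
    - apply filter_forall. intro b. apply RInt_correct. apply ex_RInt_continuous.
      intros; apply Hc.
    - apply Hc. }
  assert (HE : forall y, 0 <= y -> RInt z 0 y = Zt y).
  { intros y Hy. unfold Zt. apply RInt_ext. intros u Hu.
    rewrite Rmin_left in Hu by lra. unfold zt. rewrite Rmax_right by lra. reflexivity. }
  split.
  - intros x Hx. apply is_derive_Reals.
    replace (z x) with (zt x) by (unfold zt; rewrite Rmax_right by lra; reflexivity).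
    apply (is_derive_ext_loc Zt).
    + exists (mkposreal x Hx). intros y Hy.
      change (Rabs (y - x) < x) in Hy. apply Rabs_def2 in Hy.
      symmetry. apply HE. lra.
    + apply HD.
  - intro x. apply continuity_pt_ext with (fun y => Zt (Rmax 0 y)).
    + intro y. symmetry. apply HE. apply Rmax_l.
    + apply (continuity_pt_comp (fun y => Rmax 0 y) Zt). apply Rmax0_cont.
      apply continuity_pt_filterlim. apply (ex_derive_continuous Zt).
      eexists; apply HD.
Qed.

Lemma dmul f g x a b: derivable_pt_lim f x a -> derivable_pt_lim g x b ->
  derivable_pt_lim (fun t => f t * g t) x (a * g x + f x * b).
Proof. intros; apply (derivable_pt_lim_mult f g x a b); assumption. Qed.
Lemma dplus f g x a b: derivable_pt_lim f x a -> derivable_pt_lim g x b ->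
  derivable_pt_lim (fun t => f t + g t) x (a + b).
Proof. intros; apply (derivable_pt_lim_plus f g x a b); assumption. Qed.
Lemma dminus f g x a b: derivable_pt_lim f x a -> derivable_pt_lim g x b ->
  derivable_pt_lim (fun t => f t - g t) x (a - b).
Proof. intros; apply (derivable_pt_lim_minus f g x a b); assumption. Qed.
Lemma dconst c x : derivable_pt_lim (fun _ => c) x 0.
Proof. apply derivable_pt_lim_const. Qed.
Lemma dscal c f x a : derivable_pt_lim f x a -> derivable_pt_lim (fun t => c * f t) x (c * a).
Proof. intros. replace (c * a) with (0 * f x + c * a) by ring. apply (dmul (fun _ => c) f); auto using dconst. Qed.
Lemma dexp k x : derivable_pt_lim (fun t => exp (k * t)) x (k * exp (k * x)).
Proof. apply is_derive_Reals. auto_derive; auto. ring. Qed.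
Lemma dval f x a b : derivable_pt_lim f x a -> a = b -> derivable_pt_lim f x b.
Proof. intros H ->; exact H. Qed.

Lemma C_plus f g : C f -> C g -> C (fun t => f t + g t).
Proof. intros Hf Hg x. apply (continuity_pt_plus (fun y => f (Rmax 0 y)) (fun y => g (Rmax 0 y))); auto. Qed.
Lemma C_minus f g : C f -> C g -> C (fun t => f t - g t).
Proof. intros Hf Hg x. apply (continuity_pt_minus (fun y => f (Rmax 0 y)) (fun y => g (Rmax 0 y))); auto. Qed.
Lemma C_mult f g : C f -> C g -> C (fun t => f t * g t).
Proof. intros Hf Hg x. apply (continuity_pt_mult (fun y => f (Rmax 0 y)) (fun y => g (Rmax 0 y))); auto. Qed.
Lemma C_const c : C (fun _ => c).
Proof. intros x. apply continuity_pt_const. intros a b; reflexivity. Qed.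
Lemma C_exp k : C (fun t => exp (k * t)).
Proof.
  intros x. apply (continuity_pt_comp (fun y => Rmax 0 y) (fun u => exp (k * u))).
  apply Rmax0_cont. apply continuity_pt_filterlim. apply (ex_derive_continuous (fun u => exp (k * u))).
  auto_derive; auto.
Qed.

Lemma coord (z zd D : R -> R) (Lam K dE : R) :
  0 < Lam -> 0 < K -> 0 < dE -> C z -> z 0 = 0 ->
  (forall x, 0 < x -> derivable_pt_lim z x (zd x)) ->
  (forall x, 0 < x -> zd x = - Lam * z x - K * (z x + Lam * RInt z 0 x) + D x) ->
  (forall x, 0 < x -> Rabs (D x) <= dE) ->
  forall t, 0 <= t -> Rabs (z t) <= 2 * (dE / K).
Proof.
  intros HL HK HdE HC H0 Hd Hzd HD.
  destruct (RInt_facts z HC) as [HZd HZC].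
  set (Z := fun t => RInt z 0 t) in *.
  set (s := fun t => z t + Lam * Z t).
  set (sg := dE / K).
  assert (Hsg : 0 < sg) by (unfold sg; apply Rdiv_lt_0_compat; lra).
  assert (HZ0 : Z 0 = 0) by (unfold Z; rewrite RInt_point; reflexivity).
  assert (Hs0 : s 0 = 0) by (unfold s; rewrite H0, HZ0; ring).
  assert (HsC : C s) by (apply C_plus; [exact HC| apply C_mult; [apply C_const| exact HZC]]).
  assert (Hsd : forall x, 0 < x -> derivable_pt_lim s x (- K * s x + D x)).
  { intros x Hx. apply dval with (zd x + Lam * z x).
    - apply dplus; [apply Hd; lra| apply dscal; apply HZd; lra].
    - rewrite Hzd by lra. unfold s, Z. ring. }
  assert (Hs : forall t, 0 <= t -> Rabs (s t) <= sg).
  { intros t Ht.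
    assert (A : forall eps : R, eps * eps = 1 ->
              exp (K * t) * (eps * s t - sg) <= exp (K * 0) * (eps * s 0 - sg)).
    { intros eps Heps.
      apply (G (fun t => exp (K * t) * (eps * s t - sg))
               (fun x => exp (K * x) * (eps * D x - dE))); auto.
      - apply C_mult; [apply C_exp|]. apply C_minus; [apply C_mult; [apply C_const|exact HsC]|apply C_const].
      - intros x Hx. apply dval with (K * exp (K * x) * (eps * s x - sg) + exp (K * x) * (eps * (- K * s x + D x) - 0)).
        + apply (dmul (fun t => exp (K * t)) (fun t => eps * s t - sg)); [apply dexp|].
          apply (dminus (fun t => eps * s t) (fun _ => sg)); [apply dscal; apply Hsd; lra|apply dconst].
        + unfold sg. field. lra.
      - intros x Hx. pose proof (exp_pos (K * x)).
        assert (eps * D x <= dE).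
        { assert (Hae : Rabs eps = 1).
          { assert (Rabs eps * Rabs eps = 1) by (rewrite <- Rabs_mult, Heps; apply Rabs_R1).
            pose proof (Rabs_pos eps). nra. }
          eapply Rle_trans; [apply Rle_abs|]. rewrite Rabs_mult. rewrite Hae. specialize (HD x ltac:(lra)). lra. }
        nra. }
    rewrite Hs0 in A. replace (K * 0) with 0 in A by ring. rewrite exp_0 in A.
    pose proof (exp_pos (K * t)).
    specialize (A 1 ltac:(ring)) as A1. specialize (A (-1) ltac:(ring)) as A2.
    apply Rabs_le. split; nra. }
  assert (HZ : forall t, 0 <= t -> Rabs (Z t) <= sg / Lam).
  { intros t Ht.
    assert (A : forall eps : R, eps * eps = 1 ->
              exp (Lam * t) * (eps * Z t - sg / Lam) <= exp (Lam * 0) * (eps * Z 0 - sg / Lam)).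
    { intros eps Heps.
      apply (G (fun t => exp (Lam * t) * (eps * Z t - sg / Lam))
               (fun x => exp (Lam * x) * (eps * s x - sg))); auto.
      - apply C_mult; [apply C_exp|]. apply C_minus; [apply C_mult; [apply C_const|exact HZC]|apply C_const].
      - intros x Hx. apply dval with (Lam * exp (Lam * x) * (eps * Z x - sg / Lam) + exp (Lam * x) * (eps * z x - 0)).
        + apply (dmul (fun t => exp (Lam * t)) (fun t => eps * Z t - sg / Lam)); [apply dexp|].
          apply (dminus (fun t => eps * Z t) (fun _ => sg / Lam)); [apply dscal; apply HZd; lra|apply dconst].
        + unfold s. field. lra.
      - intros x Hx. pose proof (exp_pos (Lam * x)).
        assert (eps * s x <= sg).
        { assert (Hae : Rabs eps = 1).
          { assert (Rabs eps * Rabs eps = 1) by (rewrite <- Rabs_mult, Heps; apply Rabs_R1).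
            pose proof (Rabs_pos eps). nra. }
          eapply Rle_trans; [apply Rle_abs|]. rewrite Rabs_mult. rewrite Hae. specialize (Hs x ltac:(lra)). lra. }
        nra. }
    rewrite HZ0 in A. replace (Lam * 0) with 0 in A by ring. rewrite exp_0 in A.
    pose proof (exp_pos (Lam * t)).
    specialize (A 1 ltac:(ring)) as A1. specialize (A (-1) ltac:(ring)) as A2.
    assert (0 < sg / Lam) by (apply Rdiv_lt_0_compat; lra).
    apply Rabs_le. split; nra. }
  intros t Ht.
  replace (z t) with (s t - Lam * Z t) by (unfold s; ring).
  eapply Rle_trans; [apply Rabs_triang|]. rewrite Rabs_Ropp, Rabs_mult, (Rabs_right Lam) by lra.
  specialize (Hs t Ht). specialize (HZ t Ht).
  assert (Lam * Rabs (Z t) <= sg).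
  { replace sg with (Lam * (sg / Lam)) by (field; lra). apply Rmult_le_compat_l; lra. }
  lra.
Qed.

Lemma norm3_ge v nu : Rabs (v nu) <= norm3 v.
Proof.
  unfold norm3. rewrite <- sqrt_Rsqr_abs. apply sqrt_le_1_alt. unfold Rsqr. simpl.
  destruct nu; nra.
Qed.

Lemma norm3_le v M : (forall nu, Rabs (v nu) <= M nu) -> norm3 v <= M AX + M AY + M AZ.
Proof.
  intros H. unfold norm3.
  pose proof (H AX); pose proof (H AY); pose proof (H AZ).
  pose proof (Rabs_pos (v AX)); pose proof (Rabs_pos (v AY)); pose proof (Rabs_pos (v AZ)).
  rewrite <- (sqrt_Rsqr (M AX + M AY + M AZ)) by lra.
  apply sqrt_le_1_alt. unfold Rsqr. simpl.
  replace (v AX * (v AX * 1)) with (Rabs (v AX) * Rabs (v AX))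
    by (rewrite <- Rabs_mult, Rabs_right by nra; ring).
  replace (v AY * (v AY * 1)) with (Rabs (v AY) * Rabs (v AY))
    by (rewrite <- Rabs_mult, Rabs_right by nra; ring).
  replace (v AZ * (v AZ * 1)) with (Rabs (v AZ) * Rabs (v AZ))
    by (rewrite <- Rabs_mult, Rabs_right by nra; ring).
  nra.
Qed.

Lemma lam_facts d nu : diag_pos d -> 0 < lam_min d /\ lam_min d <= d nu /\ d nu <= lam_max d.
Proof.
  intros H. pose proof (H AX); pose proof (H AY); pose proof (H AZ).
  unfold lam_min, lam_max, Rmin, Rmax.
  repeat destruct Rle_dec; destruct nu; lra.
Qed.

Theorem theorem1
  (pO vO pE vE vEd Delta : axis -> R -> R) (dE : R)
  (Lam K : vec3) (lE : R) (r0 rinf c : vec3) (alphad : axis -> R -> R) :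
  (forall nu, deriv_nonneg (pO nu) (vO nu)) ->
  (forall nu, cont_nonneg (vO nu)) ->
  (forall nu, deriv_nonneg (pE nu) (vE nu)) ->
  (forall nu t, 0 <= t -> vE nu t = vEd nu t + Delta nu t) ->
  0 < dE ->
  (forall t, 0 <= t -> norm3 (fun nu => Delta nu t) <= dE) ->
  diag_pos Lam -> diag_pos K ->
  let eE := fun nu t => pE nu t - pO nu t in
  let deE0 := fun nu => vE nu 0 - vO nu 0 in
  let dz := (lam_min Lam + lam_max Lam) * dE / (lam_min Lam * lam_min K) in
  0 < lE ->
  (forall nu, 0 < rinf nu) ->
  (forall nu, Rabs (eE nu 0) < r0 nu) ->
  (forall nu, dz < Rmin (rinf nu) (r0 nu - Rabs (eE nu 0))) ->
  let b := fun nu => lE * eE nu 0 + deE0 nu in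
  (forall nu, 0 < c nu) ->
  (forall nu, c nu > Rabs (b nu) / (r0 nu - dz - Rabs (eE nu 0))) ->
  let alpha := fun nu t => alpha_fn lE (b nu) (c nu) (eE nu 0) t in
  (forall nu, deriv_nonneg (alpha nu) (alphad nu)) ->
  let z := fun nu t => eE nu t - alpha nu t in
  let s := fun nu t => z nu t + Lam nu * RInt (fun tau => z nu tau) 0 t in
  (forall nu t, 0 <= t ->
     vEd nu t = vO nu t + alphad nu t - Lam nu * z nu t - K nu * s nu t) ->
  (exists M, forall t, 0 <= t -> norm3 (fun nu => eE nu t) <= M) /\
  (forall nu t, 0 <= t -> Rabs (eE nu t) < rho_fn lE (r0 nu) (rinf nu) t).
Proof.
  intros HpO _ HpE Hdyn HdE HDel HLam HK eE deE0 dz HlE Hrinf Hr0 Hdz b Hc Hc2 alpha Hal z s Hctrl.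
  assert (Hz : forall nu t, 0 <= t -> Rabs (z nu t) <= dz).
  { intros nu t Ht.
    destruct (lam_facts Lam nu HLam) as [Hm1 [Hm2 Hm3]].
    destruct (lam_facts K nu HK) as [Hk1 [Hk2 Hk3]].
    eapply Rle_trans.
    - apply (coord (z nu) (fun x => vE nu x - vO nu x - alphad nu x) (Delta nu) (Lam nu) (K nu) dE); auto; try lra.
      + apply C_minus; [apply C_minus|]; eapply deriv_C; eauto.
      + unfold z, eE, alpha, alpha_fn. replace (- c nu * 0) with 0 by ring.
        replace (- lE * 0) with 0 by ring. rewrite exp_0. unfold eE. ring.
      + intros x Hx. apply (dminus (fun t => pE nu t - pO nu t) (alpha nu)).
        * apply (dminus (pE nu) (pO nu)); apply deriv_pt; auto.
        * apply deriv_pt; auto.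
      + intros x Hx. rewrite Hdyn by lra. rewrite Hctrl by lra. unfold s. change (RInt (fun tau => z nu tau) 0 x) with (RInt (z nu) 0 x). set (I := RInt (z nu) 0 x). ring.
      + intros x Hx. apply (Rle_trans _ _ _ (norm3_ge (fun nu => Delta nu x) nu)). apply HDel. lra.
    - unfold dz.
      assert (0 < K nu) by lra.
      apply Rle_trans with (2 * dE / lam_min K).
      + unfold Rdiv. rewrite Rmult_assoc. apply Rmult_le_compat_l; [lra|].
        apply Rmult_le_compat_l; [lra|]. apply Rinv_le_contravar; lra.
      + unfold Rdiv. rewrite Rinv_mult.
        replace ((lam_min Lam + lam_max Lam) * dE * (/ lam_min Lam * / lam_min K))
          with ((1 + lam_max Lam / lam_min Lam) * dE * / lam_min K) by (field; lra).
        assert (1 <= lam_max Lam / lam_min Lam).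
        { apply Rmult_le_reg_r with (lam_min Lam); [lra|]. field_simplify; lra. }
        assert (0 < / lam_min K) by (apply Rinv_0_lt_compat; lra).
        assert (0 < dE * / lam_min K) by (apply Rmult_lt_0_compat; lra).
        replace ((1 + lam_max Lam / lam_min Lam) * dE * / lam_min K) with
          ((1 + lam_max Lam / lam_min Lam) * (dE * / lam_min K)) by ring.
        replace (2 * dE * / lam_min K) with (2 * (dE * / lam_min K)) by ring.
        nra. }
  assert (Hmain : forall nu t, 0 <= t -> Rabs (eE nu t) < rho_fn lE (r0 nu) (rinf nu) t).
  { intros nu t Ht.
    specialize (Hz nu t Ht). specialize (Hdz nu). specialize (Hc nu). specialize (Hc2 nu).
    specialize (Hrinf nu).
    assert (D1 : dz < rinf nu) by (eapply Rlt_le_trans; [exact Hdz| apply Rmin_l]).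
    assert (D2 : dz < r0 nu - Rabs (eE nu 0)) by (eapply Rlt_le_trans; [exact Hdz| apply Rmin_r]).
    set (e0 := eE nu 0) in *.
    set (D := r0 nu - dz - Rabs e0) in *.
    assert (HD : 0 < D) by (unfold D; lra).
    assert (Hb : Rabs (b nu) / c nu < D).
    { apply Rmult_lt_reg_r with (c nu); [lra|].
      unfold Rdiv. rewrite Rmult_assoc, Rinv_l by lra.
      apply Rmult_lt_reg_r with (/ D); [apply Rinv_0_lt_compat; lra|].
      replace (D * c nu * / D) with (c nu) by (field; lra). lra. }
    set (E := exp (- lE * t)).
    assert (HE0 : 0 < E) by apply exp_pos.
    assert (HE1 : E <= 1).
    { unfold E. rewrite <- exp_0. destruct (Req_dec t 0) as [->|].
      - replace (- lE * 0) with 0 by ring; lra.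
      - left. apply exp_increasing. nra. }
    set (F := exp (- c nu * t)).
    assert (HF0 : 0 < F) by apply exp_pos.
    assert (HF1 : F <= 1).
    { unfold F. rewrite <- exp_0. destruct (Req_dec t 0) as [->|].
      - replace (- c nu * 0) with 0 by ring; lra.
      - left. apply exp_increasing. nra. }
    assert (Hab : Rabs (alpha nu t) <= E * (Rabs (b nu) / c nu + Rabs e0)).
    { unfold alpha, alpha_fn. fold E. fold F. fold e0.
      replace (b nu / c nu * (1 - F) * E + e0 * E) with (E * (b nu / c nu * (1 - F) + e0)) by ring.
      rewrite Rabs_mult, (Rabs_right E) by lra.
      apply Rmult_le_compat_l; [lra|].
      eapply Rle_trans; [apply Rabs_triang|].
      rewrite Rabs_mult, (Rabs_right (1 - F)) by lra.
      unfold Rdiv. rewrite Rabs_mult, (Rabs_right (/ c nu)) by (left; apply Rinv_0_lt_compat; lra).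
      assert (0 <= Rabs (b nu) * / c nu).
      { apply Rmult_le_pos; [apply Rabs_pos| left; apply Rinv_0_lt_compat; lra]. }
      nra. }
    replace (eE nu t) with (z nu t + alpha nu t) by (unfold z; ring).
    eapply Rle_lt_trans; [apply Rabs_triang|].
    unfold rho_fn. fold E.
    assert (E * (Rabs (b nu) / c nu + Rabs e0) < E * (r0 nu - dz)).
    { apply Rmult_lt_compat_l; [lra|]. unfold D in Hb. lra. }
    nra. }
  split; [|exact Hmain].
  exists ((Rabs (r0 AX - rinf AX) + rinf AX) + (Rabs (r0 AY - rinf AY) + rinf AY)
          + (Rabs (r0 AZ - rinf AZ) + rinf AZ)).
  intros t Ht. apply (norm3_le (fun nu => eE nu t) (fun nu => Rabs (r0 nu - rinf nu) + rinf nu)).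
  intros nu. left. eapply Rlt_le_trans; [apply Hmain; exact Ht|].
  unfold rho_fn.
  assert (0 < exp (- lE * t)) by apply exp_pos.
  assert (exp (- lE * t) <= 1).
  { rewrite <- exp_0. destruct (Req_dec t 0) as [->|].
    - replace (- lE * 0) with 0 by ring; lra.
    - left. apply exp_increasing. nra. }
  pose proof (Rle_abs (r0 nu - rinf nu)). pose proof (Rabs_pos (r0 nu - rinf nu)).
  apply Rplus_le_compat_r.
  eapply Rle_trans; [apply Rle_abs|]. rewrite Rabs_mult, (Rabs_right (exp _)) by lra. nra.
Qed.
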